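(* Consider any continuous-time query algorithm of duration $T$ (in the model described in the context) and let $|\phi_x(t)\rangle$ denote its state at time $t\in[0,T]$ on input $x\in\mathbb{X}$ (unit vectors, differentiable in $t$, evolving under $i\frac{d}{dt}|\phi_x(t)\rangle=H_x(t)|\phi_x(t)\rangle$). Let $\Gamma$ be any Hermitian $|\mathbb{X}|\times|\mathbb{X}|$ matrix and $v\in\mathbb{C}^{\mathbb X}$ a unit vector, and define $$W(t)=\sum_{x,y\in\mathbb{X}}\overline{v_x}\,v_y\,\Gamma_{x,y}\,\langle\phi_x(t)|\phi_y(t)\rangle .$$ Then for all $t\in[0,T]$ (where the Hamiltonian is continuous), $$\Big|\frac{dW(t)}{dt}\Big|\le 2\max_{j\in[n]}\|\Gamma\circ\Delta_j\|,$$ and consequently $|W(T)-W(0)|\le 2T\max_j\|\Gamma\circ\Delta_j\|$.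
   Context: $(A\circ B)_{ij}=A_{ij}B_{ij}$; $\|A\|$ is the operator norm. For $j\in[n]$, $\Delta_j$ is the $|\mathbb{X}|\times|\mathbb{X}|$ matrix with $(\Delta_j)_{x,y}=1-\delta_{x_j,y_j}$, where $\mathbb{X}\subseteq\Sigma^n$, $\Sigma$ finite. Continuous-time query model: fix Hermitian $h(y)$, $y\in\Sigma$, on $\mathbb{C}^r$ with $\|h(y)\|\le1$; $H_{\mathcal Q}(x)=\sum_{j=1}^n|j\rangle\langle j|\otimes h(x_j)$. The algorithm acts on $\mathcal{H}=(\mathbb{C}^n\otimes\mathbb{C}^r\otimes\mathbb{C}^w)\oplus\mathcal{H}'$ via $H_x(t)=H_{\mathcal D}(t)+\alpha(t)\widetilde H_{\mathcal Q}(x)$, where $\widetilde H_{\mathcal Q}(x)$ acts as $H_{\mathcal Q}(x)\otimes I$ on the first summand and $0$ on $\mathcal H'$, $H_{\mathcal D}(t)$ is an input-independent Hermitian operator (piecewise continuous in $t$), and $\alpha:[0,T]\to\mathbb{R}$ with $|\alpha(t)|\le1$. The initial states $|\phi_x(0)\rangle$ are arbitrary unit vectors. *)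

(* Defs.v *)
From Stdlib Require Import Reals Lra List ClassicalEpsilon.
Import ListNotations.
Open Scope R_scope.

Record Cpx : Type := mkC { re : R; im : R }.
Definition C0 : Cpx := mkC 0 0.
Definition C1 : Cpx := mkC 1 0.
Definition RtoC (a : R) : Cpx := mkC a 0.
Definition Cadd (z w : Cpx) : Cpx := mkC (re z + re w) (im z + im w).
Definition Copp (z : Cpx) : Cpx := mkC (- re z) (- im z).
Definition Csub (z w : Cpx) : Cpx := Cadd z (Copp w).
Definition Cmul (z w : Cpx) : Cpx :=
  mkC (re z * re w - im z * im w) (re z * im w + im z * re w).
Definition Cconj (z : Cpx) : Cpx := mkC (re z) (- im z).
Definition Cmod (z : Cpx) : R := sqrt (re z ^ 2 + im z ^ 2).

Definition sumC {A : Type} (l : list A) (f : A -> Cpx) : Cpx :=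
  fold_right (fun a acc => Cadd (f a) acc) C0 l.
Definition sumR {A : Type} (l : list A) (f : A -> R) : R :=
  fold_right (fun a acc => f a + acc) 0 l.

Definition vnorm {A : Type} (l : list A) (u : A -> Cpx) : R :=
  sqrt (sumR l (fun k => re (u k) ^ 2 + im (u k) ^ 2)).
Definition matvec {A : Type} (l : list A) (M : A -> A -> Cpx) (u : A -> Cpx) : A -> Cpx :=
  fun k => sumC l (fun k' => Cmul (M k k') (u k')).
Definition inner {A : Type} (l : list A) (u v : A -> Cpx) : Cpx :=
  sumC l (fun k => Cmul (Cconj (u k)) (v k)).
Definition hermitian {A : Type} (l : list A) (M : A -> A -> Cpx) : Prop :=
  forall k k', In k l -> In k' l -> M k' k = Cconj (M k k').

(** Operator norm: the least upper bound of ||M u|| over vectors with ||u|| <= 1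
    (this set is nonempty and bounded, so the lub exists; we pick it by
    classical choice). *)
Definition opnorm_set {A : Type} (l : list A) (M : A -> A -> Cpx) : R -> Prop :=
  fun s => exists u : A -> Cpx, vnorm l u <= 1 /\ s = vnorm l (matvec l M u).
Definition opnorm {A : Type} (l : list A) (M : A -> A -> Cpx) : R :=
  epsilon (inhabits 0) (fun s => is_lub (opnorm_set l M) s).

Definition hadamard {A : Type} (M N : A -> A -> Cpx) : A -> A -> Cpx :=
  fun k k' => Cmul (M k k') (N k k').

(** maximum of a finite list of reals (0 for the empty list; all our
    entries are norms, hence nonnegative) *)
Definition maxR (l : list R) : R := fold_right Rmax 0 l.

(** Inputs: X = {X 0, ..., X (m-1)} subset of Sig^n, input X p has letters
    X p j for j < n.  Delta_j (on positions of X) *)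
Definition DeltaMat {Sig : Type} (Sig_dec : forall a b : Sig, {a = b} + {a <> b})
  (X : nat -> nat -> Sig) (j : nat) : nat -> nat -> Cpx :=
  fun p q => if Sig_dec (X p j) (X q j) then C0 else C1.

(** Basis of H = (Cpx^n (x) Cpx^r (x) Cpx^w) (+) H', dim H' = d:
    inl (j,a,b) is |j>|a>|b>, inr k is the k-th basis vector of H'. *)
Definition Idx : Type := ((nat * nat) * nat + nat)%type.
Definition idx_list (n r w d : nat) : list Idx :=
  map inl (flat_map (fun j => flat_map (fun a => map (fun b => (j, a, b)) (seq 0 w))
                                         (seq 0 r)) (seq 0 n))
  ++ map inr (seq 0 d).

(** tilde H_Q(x) = (sum_j |j><j| (x) h(x_j)) (x) I_w on the first summand, 0 on H'. *)
Definition HQ {Sig : Type} (h : Sig -> nat -> nat -> Cpx) (x : nat -> Sig) : Idx -> Idx -> Cpx :=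
  fun k k' =>
    match k, k' with
    | inl (j, a, b), inl (j', a', b') =>
        if (Nat.eqb j j' && Nat.eqb b b')%bool then h (x j) a a' else C0
    | _, _ => C0
    end.

Definition Hx {Sig : Type} (HD : R -> Idx -> Idx -> Cpx) (alpha : R -> R)
  (h : Sig -> nat -> nat -> Cpx) (x : nat -> Sig) (t : R) : Idx -> Idx -> Cpx :=
  fun k k' => Cadd (HD t k k') (Cmul (RtoC (alpha t)) (HQ h x k k')).

Definition ham_continuous_at (l : list Idx) (HD : R -> Idx -> Idx -> Cpx) (alpha : R -> R)
  (t : R) : Prop :=
  continuity_pt alpha t /\
  forall k k', In k l -> In k' l ->
    continuity_pt (fun s => re (HD s k k')) t /\ continuity_pt (fun s => im (HD s k k')) t.

Definition Wfun (m : nat) (l : list Idx) (v : nat -> Cpx) (Gamma : nat -> nat -> Cpx)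
  (phi : nat -> R -> Idx -> Cpx) (t : R) : Cpx :=
  sumC (seq 0 m) (fun p => sumC (seq 0 m) (fun q =>
    Cmul (Cmul (Cmul (Cconj (v p)) (v q)) (Gamma p q)) (inner l (phi p t) (phi q t)))).

(* Main.v *)
Require Import Defs.
From Stdlib Require Import Reals List ClassicalEpsilon.
From Stdlib Require Import Lra Lia Psatz Ring FunctionalExtensionality.
From Coquelicot Require Complex.
Import ListNotations.
Open Scope R_scope.

Lemma Cext (z w : Cpx) : re z = re w -> im z = im w -> z = w.
Proof. destruct z, w; simpl; intros; subst; reflexivity. Qed.

Lemma Cring : ring_theory C0 Defs.C1 Cadd Cmul Csub Copp (@eq Cpx).
Proof.
  constructor; intros; apply Cext; unfold Cadd, Cmul, Csub, Copp, C0, Defs.C1; simpl; ring.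
Qed.
Add Ring Cpxring : Cring.

Lemma mvt_le (g : R -> R) (K a b : R) : a < b ->
  (forall t, a <= t <= b -> continuity_pt g t) ->
  (forall t, a < t < b -> exists l, derivable_pt_lim g t l /\ l <= K) ->
  g b - g a <= K * (b - a).
Proof.
  intros Hab Hc Hd.
  assert (pr1 : forall c, a < c < b -> derivable_pt g c).
  { intros c Pc. destruct (constructive_indefinite_description _ (Hd c Pc)) as [l [Hl _]].
    exists l. exact Hl. }
  assert (pr2 : forall c, a < c < b -> derivable_pt id c).
  { intros c _. apply derivable_pt_id. }
  destruct (MVT g id a b pr1 pr2 Hab Hc (fun c _ => derivable_continuous_pt _ _ (derivable_pt_id c)))
    as [c [P HP]].
  assert (Ei : derive_pt id c (pr2 c P) = 1) by (apply derive_pt_eq_0; apply derivable_pt_lim_id).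
  rewrite Ei in HP. unfold id in HP.
  destruct (Hd c P) as [l [Hl HlK]].
  assert (E : derive_pt g c (pr1 c P) = l) by (apply derive_pt_eq_0; exact Hl).
  rewrite E in HP. nra.
Qed.

Lemma mvt_exc (g : R -> R) (K : R) (bs : list R) : forall a b, a <= b ->
  (forall t, a <= t <= b -> continuity_pt g t) ->
  (forall t, a < t < b -> ~ In t bs -> exists l, derivable_pt_lim g t l /\ l <= K) ->
  g b - g a <= K * (b - a).
Proof.
  induction bs as [|c bs IH]; intros a b Hab Hc Hd.
  - destruct (Req_dec a b) as [->|Hne]; [lra|].
    apply mvt_le; [lra|exact Hc|]. intros t Ht; apply Hd; auto.
  - destruct (Rlt_dec a c) as [Hac|Hac]; [destruct (Rlt_dec c b) as [Hcb|Hcb]|].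
    + assert (H1 : g c - g a <= K * (c - a)).
      { apply IH; [lra| intros; apply Hc; lra |].
        intros t Ht Hn. apply Hd; [lra|]. intros [E|E]; [lra|auto]. }
      assert (H2 : g b - g c <= K * (b - c)).
      { apply IH; [lra| intros; apply Hc; lra |].
        intros t Ht Hn. apply Hd; [lra|]. intros [E|E]; [lra|auto]. }
      lra.
    + apply IH; auto. intros t Ht Hn. apply Hd; auto. intros [E|E]; [lra|auto].
    + apply IH; auto. intros t Ht Hn. apply Hd; auto. intros [E|E]; [lra|auto].
Qed.


Lemma Cmod_tri z w : Cmod (Cadd z w) <= Cmod z + Cmod w.
Proof. exact (Complex.Cmod_triangle (re z, im z) (re w, im w)). Qed.
Lemma Cmod_mul z w : Cmod (Cmul z w) = Cmod z * Cmod w.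
Proof. exact (Complex.Cmod_mult (re z, im z) (re w, im w)). Qed.
Lemma Cmod_cj z : Cmod (Cconj z) = Cmod z.
Proof. exact (Complex.Cmod_conj (re z, im z)). Qed.
Lemma Cmod_ge0 z : 0 <= Cmod z.
Proof. apply sqrt_pos. Qed.
Lemma Cmod_sq z : Cmod z * Cmod z = re z ^ 2 + im z ^ 2.
Proof. unfold Cmod. rewrite sqrt_sqrt; [ring|nra]. Qed.
Lemma Cmod_RtoC a : Cmod (RtoC a) = Rabs a.
Proof. unfold Cmod, RtoC; simpl. rewrite <- sqrt_Rsqr_abs. f_equal. unfold Rsqr. ring. Qed.

Section Sums.
Context {A : Type}.
Implicit Types (l : list A).

Lemma sumC_app l1 l2 f : sumC (l1 ++ l2) f = Cadd (sumC l1 f) (sumC l2 f).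
Proof. induction l1; simpl; [ring| rewrite IHl1; ring]. Qed.
Lemma sumC_add l f g : sumC l (fun a => Cadd (f a) (g a)) = Cadd (sumC l f) (sumC l g).
Proof. induction l; simpl; [ring| rewrite IHl; ring]. Qed.
Lemma sumC_sub l f g : sumC l (fun a => Csub (f a) (g a)) = Csub (sumC l f) (sumC l g).
Proof. induction l; simpl; [ring| rewrite IHl; ring]. Qed.
Lemma sumC_scal l c f : sumC l (fun a => Cmul c (f a)) = Cmul c (sumC l f).
Proof. induction l; simpl; [ring| rewrite IHl; ring]. Qed.
Lemma sumC_scalr l c f : sumC l (fun a => Cmul (f a) c) = Cmul (sumC l f) c.
Proof. induction l; simpl; [ring| rewrite IHl; ring]. Qed.
Lemma sumC_ext l f g : (forall a, In a l -> f a = g a) -> sumC l f = sumC l g.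
Proof. induction l; simpl; intros H; auto. rewrite H, IHl; auto. Qed.
Lemma sumC_zero l f : (forall a, In a l -> f a = C0) -> sumC l f = C0.
Proof. induction l; simpl; intros H; auto. rewrite H, IHl; auto. ring. Qed.
Lemma sumC_conj l f : Cconj (sumC l f) = sumC l (fun a => Cconj (f a)).
Proof. induction l; simpl. apply Cext; simpl; ring. rewrite <- IHl. apply Cext; simpl; ring. Qed.
Lemma re_sumC l f : re (sumC l f) = sumR l (fun a => re (f a)).
Proof. induction l; simpl; auto. rewrite IHl; auto. Qed.
Lemma im_sumC l f : im (sumC l f) = sumR l (fun a => im (f a)).
Proof. induction l; simpl; auto. rewrite IHl; auto. Qed.

Lemma sumR_app l1 l2 f : sumR (l1 ++ l2) f = sumR l1 f + sumR l2 f.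
Proof. induction l1; simpl; [ring| rewrite IHl1; ring]. Qed.
Lemma sumR_add l f g : sumR l (fun a => f a + g a) = sumR l f + sumR l g.
Proof. induction l; simpl; [ring| rewrite IHl; ring]. Qed.
Lemma sumR_scal l c f : sumR l (fun a => c * f a) = c * sumR l f.
Proof. induction l; simpl; [ring| rewrite IHl; ring]. Qed.
Lemma sumR_ext l f g : (forall a, In a l -> f a = g a) -> sumR l f = sumR l g.
Proof. induction l; simpl; intros H; auto. rewrite H, IHl; auto. Qed.
Lemma sumR_le l f g : (forall a, In a l -> f a <= g a) -> sumR l f <= sumR l g.
Proof. induction l; simpl; intros H; [lra|]. specialize (IHl (fun a H' => H a (or_intror H'))).
  specialize (H a (or_introl eq_refl)). lra. Qed.
Lemma sumR_ge0 l f : (forall a, In a l -> 0 <= f a) -> 0 <= sumR l f.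
Proof. intros H. replace 0 with (sumR l (fun _ => 0)). apply sumR_le; auto.
  induction l; simpl; auto. rewrite IHl; [ring|]. intros; apply H; simpl; auto. Qed.
Lemma Cmod_sum l f : Cmod (sumC l f) <= sumR l (fun a => Cmod (f a)).
Proof. induction l; simpl.
  - unfold Cmod, C0; simpl. replace (0*(0*1)+0*(0*1)) with 0 by ring. rewrite sqrt_0; lra.
  - eapply Rle_trans; [apply Cmod_tri|]. lra. Qed.
End Sums.

Lemma sumC_map {A B} (l : list A) (g : A -> B) f : sumC (map g l) f = sumC l (fun a => f (g a)).
Proof. induction l; simpl; auto. rewrite IHl; auto. Qed.
Lemma sumC_flat_map {A B} (l : list A) (g : A -> list B) f :
  sumC (flat_map g l) f = sumC l (fun a => sumC (g a) f).
Proof. induction l; simpl; auto. rewrite sumC_app, IHl; auto. Qed.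
Lemma sumR_map {A B} (l : list A) (g : A -> B) f : sumR (map g l) f = sumR l (fun a => f (g a)).
Proof. induction l; simpl; auto. rewrite IHl; auto. Qed.
Lemma sumR_flat_map {A B} (l : list A) (g : A -> list B) f :
  sumR (flat_map g l) f = sumR l (fun a => sumR (g a) f).
Proof. induction l; simpl; auto. rewrite sumR_app, IHl; auto. Qed.
Lemma sumC_swap {A B} (l1 : list A) (l2 : list B) F :
  sumC l1 (fun a => sumC l2 (fun b => F a b)) = sumC l2 (fun b => sumC l1 (fun a => F a b)).
Proof. induction l1; simpl. rewrite sumC_zero; auto.
  rewrite IHl1, <- sumC_add. auto. Qed.
Lemma sumR_swap {A B} (l1 : list A) (l2 : list B) F :
  sumR l1 (fun a => sumR l2 (fun b => F a b)) = sumR l2 (fun b => sumR l1 (fun a => F a b)).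
Proof. induction l1; simpl.
  - induction l2; simpl; auto. rewrite <- IHl2; ring.
  - rewrite IHl1, <- sumR_add. auto. Qed.

Definition Cd (f : R -> Cpx) (t : R) (z : Cpx) : Prop :=
  derivable_pt_lim (fun s => re (f s)) t (re z) /\ derivable_pt_lim (fun s => im (f s)) t (im z).

Lemma dlim_eq f t a b : derivable_pt_lim f t a -> a = b -> derivable_pt_lim f t b.
Proof. intros; subst; auto. Qed.

Lemma Cd_const c t : Cd (fun _ => c) t C0.
Proof. split; apply derivable_pt_lim_const. Qed.
Lemma Cd_add f g t a b : Cd f t a -> Cd g t b -> Cd (fun s => Cadd (f s) (g s)) t (Cadd a b).
Proof. intros [H1 H2] [H3 H4]; split; simpl; apply derivable_pt_lim_plus; auto. Qed.
Lemma Cd_mul f g t a b : Cd f t a -> Cd g t b ->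
  Cd (fun s => Cmul (f s) (g s)) t (Cadd (Cmul a (g t)) (Cmul (f t) b)).
Proof. intros [H1 H2] [H3 H4]; split; simpl.
  - eapply dlim_eq. apply derivable_pt_lim_minus; apply derivable_pt_lim_mult; eauto. cbv beta; ring.
  - eapply dlim_eq. apply derivable_pt_lim_plus; apply derivable_pt_lim_mult; eauto. cbv beta; ring.
Qed.
Lemma Cd_conj f t a : Cd f t a -> Cd (fun s => Cconj (f s)) t (Cconj a).
Proof. intros [H1 H2]; split; simpl; auto. apply derivable_pt_lim_opp; auto. Qed.
Lemma Cd_sum {A} (l : list A) F F' t : (forall a, In a l -> Cd (F a) t (F' a)) ->
  Cd (fun s => sumC l (fun a => F a s)) t (sumC l F').
Proof. induction l; simpl; intros H. apply Cd_const.
  apply Cd_add; auto. Qed.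

Definition Cc (f : R -> Cpx) (t : R) : Prop :=
  continuity_pt (fun s => re (f s)) t /\ continuity_pt (fun s => im (f s)) t.
Lemma Cc_const c t : Cc (fun _ => c) t.
Proof. split; apply continuity_pt_const; intros ? ?; auto. Qed.
Lemma Cc_add f g t : Cc f t -> Cc g t -> Cc (fun s => Cadd (f s) (g s)) t.
Proof. intros [H1 H2] [H3 H4]; split; simpl; apply continuity_pt_plus; auto. Qed.
Lemma Cc_mul f g t : Cc f t -> Cc g t -> Cc (fun s => Cmul (f s) (g s)) t.
Proof. intros [H1 H2] [H3 H4]; split; simpl.
  apply continuity_pt_minus; apply continuity_pt_mult; auto.
  apply continuity_pt_plus; apply continuity_pt_mult; auto. Qed.
Lemma Cc_conj f t : Cc f t -> Cc (fun s => Cconj (f s)) t.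
Proof. intros [H1 H2]; split; simpl; auto. apply continuity_pt_opp; auto. Qed.
Lemma Cc_sum {A} (l : list A) F t : (forall a, In a l -> Cc (F a) t) ->
  Cc (fun s => sumC l (fun a => F a s)) t.
Proof. induction l; simpl; intros H. apply Cc_const. apply Cc_add; auto. Qed.


Definition nsq {A} (l : list A) (u : A -> Cpx) : R := sumR l (fun k => re (u k) ^ 2 + im (u k) ^ 2).
Lemma vnorm_nsq {A} (l : list A) u : vnorm l u = sqrt (nsq l u).
Proof. reflexivity. Qed.
Lemma nsq_ge0 {A} (l : list A) u : 0 <= nsq l u.
Proof. apply sumR_ge0; intros; nra. Qed.
Lemma sumR_term {A} (l : list A) f a : (forall b, In b l -> 0 <= f b) -> In a l -> f a <= sumR l f.
Proof. induction l; simpl; intros H Ha; [contradiction|]. destruct Ha as [->|Ha].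
  - assert (0 <= sumR l f) by (apply sumR_ge0; auto). lra.
  - assert (f a <= sumR l f) by (apply IHl; auto). specialize (H a0 (or_introl eq_refl)). lra. Qed.

Section Op.
Context {A : Type} (l : list A) (M : A -> A -> Cpx).

Lemma matvec_zero u : (forall k, In k l -> u k = C0) -> forall k, matvec l M u k = C0.
Proof. intros H k. unfold matvec. apply sumC_zero. intros a Ha. rewrite H; auto. ring. Qed.
Lemma nsq_zero u : (forall k, In k l -> u k = C0) -> nsq l u = 0.
Proof. intros H. unfold nsq. rewrite (sumR_ext _ _ (fun _ => 0)).
  - clear H; induction l; simpl; auto. rewrite IHl0; ring.
  - intros a Ha. rewrite H; auto. simpl; ring. Qed.

Definition Bd := sqrt (sumR l (fun k => (sumR l (fun k' => Cmod (M k k'))) ^ 2)).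

Lemma set_bounded : bound (opnorm_set l M).
Proof.
  exists Bd. intros s [u [Hu ->]]. unfold vnorm at 1, Bd. apply sqrt_le_1_alt.
  apply sumR_le. intros k Hk.
  assert (Hm : Cmod (matvec l M u k) <= sumR l (fun k' => Cmod (M k k'))).
  { unfold matvec. eapply Rle_trans; [apply Cmod_sum|]. apply sumR_le. intros k' Hk'.
    rewrite Cmod_mul. assert (Cmod (u k') <= 1).
    { assert (Hs : nsq l u <= 1).
      { rewrite vnorm_nsq in Hu. assert (Hn := nsq_ge0 l u).
        destruct (Rle_lt_dec (nsq l u) 1); auto. exfalso.
        assert (1 < sqrt (nsq l u)); [|lra]. rewrite <- sqrt_1. apply sqrt_lt_1_alt; lra. }
      assert (Hk2 : re (u k')^2 + im (u k')^2 <= nsq l u).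
      { apply (sumR_term l (fun k => re (u k)^2 + im (u k)^2)); auto. intros; nra. }
      rewrite <- Cmod_sq in Hk2. assert (Hc := Cmod_ge0 (u k')). nra. }
    assert (Hc := Cmod_ge0 (M k k')). nra. }
  rewrite <- Cmod_sq. assert (Hc := Cmod_ge0 (matvec l M u k)). nra.
Qed.

Lemma set_inhab : exists s, opnorm_set l M s.
Proof. exists (vnorm l (matvec l M (fun _ => C0))). exists (fun _ => C0). split; auto.
  rewrite vnorm_nsq, nsq_zero; auto. rewrite sqrt_0; lra. Qed.

Lemma opnorm_lub : is_lub (opnorm_set l M) (opnorm l M).
Proof. unfold opnorm. apply epsilon_spec.
  destruct (completeness _ set_bounded set_inhab) as [x Hx]. exists x; auto. Qed.

Lemma opnorm_ge0 : 0 <= opnorm l M.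
Proof. destruct opnorm_lub as [H _]. apply H. exists (fun _ => C0). split.
  - rewrite vnorm_nsq, nsq_zero; auto. rewrite sqrt_0; lra.
  - rewrite vnorm_nsq, nsq_zero. now rewrite sqrt_0. intros; apply matvec_zero; auto. Qed.

Lemma nsq_scal c u : nsq l (fun k => Cmul (RtoC c) (u k)) = c^2 * nsq l u.
Proof. unfold nsq. rewrite <- sumR_scal. apply sumR_ext; intros; simpl; ring. Qed.

Lemma opnorm_bound u : vnorm l (matvec l M u) <= opnorm l M * vnorm l u.
Proof.
  assert (H0 := nsq_ge0 l u). rewrite !vnorm_nsq.
  destruct (Req_dec (nsq l u) 0) as [Hz|Hnz].
  - assert (Hu : forall k, In k l -> u k = C0).
    { intros k Hk. assert (Ht : re (u k)^2 + im (u k)^2 <= nsq l u).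
      { apply (sumR_term l (fun k => re (u k)^2 + im (u k)^2)); auto. intros; nra. }
      apply Cext; simpl; nra. }
    rewrite (nsq_zero (matvec l M u)). rewrite Hz, sqrt_0; lra.
    intros; apply matvec_zero; auto.
  - set (s := sqrt (nsq l u)).
    assert (Hs : 0 < s) by (apply sqrt_lt_R0; lra).
    set (u' := fun k => Cmul (RtoC (/ s)) (u k)).
    assert (Hv : vnorm l u' = 1).
    { rewrite vnorm_nsq. unfold u'. rewrite nsq_scal.
      replace (nsq l u) with (s * s) by (apply sqrt_sqrt; lra).
      replace ((/s)^2 * (s*s)) with 1 by (field; lra). apply sqrt_1. }
    assert (Hm : matvec l M u' = fun k => Cmul (RtoC (/ s)) (matvec l M u k)).
    { extensionality k. unfold matvec, u'. rewrite <- sumC_scal. apply sumC_ext; intros; ring. }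
    destruct opnorm_lub as [Hub _].
    assert (Hle : vnorm l (matvec l M u') <= opnorm l M).
    { apply Hub. exists u'. split; auto; lra. }
    rewrite Hm, vnorm_nsq, nsq_scal in Hle.
    rewrite sqrt_mult_alt in Hle by (apply pow2_ge_0).
    replace ((/s)^2) with (Rsqr (/s)) in Hle by (unfold Rsqr; ring).
    rewrite sqrt_Rsqr in Hle by (left; apply Rinv_0_lt_compat; lra).
    fold s. apply (Rmult_le_reg_l (/ s)). apply Rinv_0_lt_compat; lra.
    replace (/ s * (opnorm l M * s)) with (opnorm l M) by (field; lra). exact Hle.
Qed.

Lemma opnorm_bound_sq u : nsq l (matvec l M u) <= (opnorm l M)^2 * nsq l u.
Proof.
  assert (H := opnorm_bound u). rewrite !vnorm_nsq in H.
  assert (H1 := nsq_ge0 l u). assert (H2 := nsq_ge0 l (matvec l M u)).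
  assert (H3 := opnorm_ge0). assert (H4 := sqrt_pos (nsq l u)).
  rewrite <- (sqrt_sqrt (nsq l (matvec l M u))) by lra.
  rewrite <- (sqrt_sqrt (nsq l u)) by lra.
  assert (0 <= sqrt (nsq l (matvec l M u))) by apply sqrt_pos. nra.
Qed.
End Op.


Lemma sumC_idx n r w d f : sumC (idx_list n r w d) f =
  Cadd (sumC (seq 0 n) (fun j => sumC (seq 0 r) (fun a => sumC (seq 0 w) (fun b => f (inl (j,a,b))))))
       (sumC (seq 0 d) (fun k => f (inr k))).
Proof. unfold idx_list. rewrite sumC_app, !sumC_map, sumC_flat_map. f_equal.
  apply sumC_ext; intros. rewrite sumC_flat_map. apply sumC_ext; intros. rewrite sumC_map. auto. Qed.
Lemma sumR_idx n r w d f : sumR (idx_list n r w d) f =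
  sumR (seq 0 n) (fun j => sumR (seq 0 r) (fun a => sumR (seq 0 w) (fun b => f (inl (j,a,b)))))
       + sumR (seq 0 d) (fun k => f (inr k)).
Proof. unfold idx_list. rewrite sumR_app, !sumR_map, sumR_flat_map. f_equal.
  apply sumR_ext; intros. rewrite sumR_flat_map. apply sumR_ext; intros. rewrite sumR_map. auto. Qed.

Lemma in_idx n r w d j a b : (j < n)%nat -> (a < r)%nat -> (b < w)%nat -> In (inl (j,a,b)) (idx_list n r w d).
Proof. intros. unfold idx_list. apply in_or_app; left. apply in_map. apply in_flat_map.
  exists j; split; [apply in_seq; lia|]. apply in_flat_map. exists a; split; [apply in_seq; lia|].
  apply in_map. apply in_seq; lia. Qed.

Lemma collapse (F : nat -> Cpx) k : forall len s, (s <= k < s + len)%nat ->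
  sumC (seq s len) (fun i => if Nat.eqb k i then F i else C0) = F k.
Proof. induction len; intros s Hs; [lia|]. simpl.
  destruct (Nat.eqb_spec k s).
  - subst. rewrite sumC_zero. ring. intros i Hi. apply in_seq in Hi.
    destruct (Nat.eqb_spec s i); [lia|auto].
  - rewrite IHlen by lia. ring. Qed.

Lemma matvec_HQ_inl {Sig} n r w d (h : Sig -> nat -> nat -> Cpx) x phi j a b :
  (j < n)%nat -> (b < w)%nat ->
  matvec (idx_list n r w d) (HQ h x) phi (inl (j,a,b)) =
  sumC (seq 0 r) (fun a' => Cmul (h (x j) a a') (phi (inl (j,a',b)))).
Proof. intros Hj Hb. unfold matvec. rewrite sumC_idx.
  rewrite (sumC_zero (seq 0 d)) by (intros; simpl; ring).
  rewrite (sumC_ext _ _ (fun j' => if Nat.eqb j j' then sumC (seq 0 r) (fun a' =>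
     sumC (seq 0 w) (fun b' => if Nat.eqb b b' then Cmul (h (x j') a a') (phi (inl (j', a', b'))) else C0)) else C0)).
  2:{ intros j' _. destruct (Nat.eqb_spec j j').
      - apply sumC_ext; intros; apply sumC_ext; intros. simpl. subst. rewrite Nat.eqb_refl. simpl.
        destruct (Nat.eqb b a1); simpl; auto. ring.
      - apply sumC_zero; intros; apply sumC_zero; intros. simpl.
        destruct (Nat.eqb_spec j j'); [lia|]. simpl. ring. }
  rewrite (collapse (fun j' => sumC (seq 0 r) (fun a' =>
     sumC (seq 0 w) (fun b' => if Nat.eqb b b' then Cmul (h (x j') a a') (phi (inl (j', a', b'))) else C0)))) by lia.
  match goal with |- Cadd ?X C0 = _ => replace (Cadd X C0) with X by ring end. apply sumC_ext; intros a1 _.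
  apply (collapse (fun b' => Cmul (h (x j) a a1) (phi (inl (j, a1, b'))))). lia.
Qed.

Lemma matvec_HQ_inr {Sig} n r w d (h : Sig -> nat -> nat -> Cpx) x phi k :
  matvec (idx_list n r w d) (HQ h x) phi (inr k) = C0.
Proof. unfold matvec. apply sumC_zero. intros [[[? ?] ?]|?] _; simpl; ring. Qed.


Lemma Cconj_mul z w : Cconj (Cmul z w) = Cmul (Cconj z) (Cconj w).
Proof. apply Cext; simpl; ring. Qed.
Lemma Cconj_add z w : Cconj (Cadd z w) = Cadd (Cconj z) (Cconj w).
Proof. apply Cext; simpl; ring. Qed.
Lemma Cconj_RtoC a : Cconj (RtoC a) = RtoC a.
Proof. apply Cext; simpl; ring. Qed.

Lemma herm_swap {A} (l : list A) H u w : hermitian l H ->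
  inner l (matvec l H u) w = inner l u (matvec l H w).
Proof. intros Hh. unfold inner, matvec.
  rewrite (sumC_ext l _ (fun k => sumC l (fun k' => Cmul (Cmul (Cconj (H k k')) (Cconj (u k'))) (w k)))).
  2:{ intros k _. rewrite sumC_conj, <- sumC_scalr. apply sumC_ext; intros. rewrite Cconj_mul; auto. }
  rewrite sumC_swap. apply sumC_ext; intros k Hk. rewrite <- sumC_scal. apply sumC_ext; intros k' Hk'.
  rewrite <- (Hh k' k) by auto. ring. Qed.

Lemma amgm_C (a c : Cpx) (g : R) : 0 < g ->
  Cmod (Cmul (Cconj a) c) <= (g * (re a ^ 2 + im a ^ 2) + / g * (re c ^ 2 + im c ^ 2)) / 2.
Proof. intros Hg. rewrite Cmod_mul, Cmod_cj, <- !Cmod_sq.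
  assert (H1 := Cmod_ge0 a). assert (H2 := Cmod_ge0 c).
  set (x := Cmod a) in *. set (y := Cmod c) in *.
  assert (0 <= (g * x - y) ^ 2 / g). { apply Rmult_le_pos. apply pow2_ge_0. left; apply Rinv_0_lt_compat; lra. }
  assert (E : (g * x - y) ^ 2 / g = g * (x*x) + / g * (y*y) - 2 * (x * y)) by (field; lra).
  lra. Qed.

Lemma key_bound (L : list nat) G (al be : nat -> Cpx) :
  Cmod (inner L al (matvec L G be)) <= opnorm L G * (nsq L al + nsq L be) / 2.
Proof.
  assert (Hg0 := opnorm_ge0 L G). assert (Hb := opnorm_bound_sq L G be).
  assert (Ha := nsq_ge0 L al). assert (Hb0 := nsq_ge0 L be).
  destruct (Req_dec (opnorm L G) 0) as [Hz|Hnz].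
  - rewrite Hz in Hb. replace (0^2 * nsq L be) with 0 in Hb by ring.
    assert (Hm0 : forall k, In k L -> matvec L G be k = C0).
    { intros k Hk. assert (Ht : re (matvec L G be k)^2 + im (matvec L G be k)^2 <= nsq L (matvec L G be)).
      { apply (sumR_term L (fun k => re (matvec L G be k)^2 + im (matvec L G be k)^2)); auto. intros; nra. }
      assert (Hn := nsq_ge0 L (matvec L G be)). apply Cext; simpl; nra. }
    unfold inner. rewrite sumC_zero. rewrite Hz. unfold Cmod, C0; simpl.
    replace (0*(0*1)+0*(0*1)) with 0 by ring. rewrite sqrt_0; lra.
    intros k Hk. rewrite Hm0 by auto. ring.
  - set (g := opnorm L G) in *. assert (Hgp : 0 < g) by lra.
    unfold inner. eapply Rle_trans; [apply Cmod_sum|].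
    eapply Rle_trans. apply sumR_le. intros k _. apply (amgm_C (al k) (matvec L G be k) g Hgp).
    rewrite (sumR_ext L _ (fun k => / 2 * (g * (re (al k)^2 + im (al k)^2)) +
       / 2 * (/ g * (re (matvec L G be k)^2 + im (matvec L G be k)^2)))) by (intros; field; lra).
    rewrite sumR_add, !sumR_scal. fold (nsq L al). fold (nsq L (matvec L G be)).
    assert (/ g * nsq L (matvec L G be) <= g * nsq L be).
    { apply (Rmult_le_reg_l g); auto. replace (g * (/ g * nsq L (matvec L G be))) with (nsq L (matvec L G be)) by (field; lra).
      nra. }
    lra.
Qed.

Lemma maxR_ge0 l : 0 <= maxR l.
Proof. induction l; simpl; [lra|]. eapply Rle_trans; [exact IHl| apply Rmax_r]. Qed.
Lemma maxR_in l x : In x l -> x <= maxR l.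
Proof. induction l; simpl; intros H; [contradiction|]. destruct H as [->|H].
  apply Rmax_l. eapply Rle_trans; [apply IHl; auto| apply Rmax_r]. Qed.


Lemma Cd_eq f t a b : Cd f t a -> a = b -> Cd f t b.
Proof. intros; subst; auto. Qed.
Lemma Cd_scal c f t a : Cd f t a -> Cd (fun s => Cmul c (f s)) t (Cmul c a).
Proof. intros H. eapply Cd_eq. apply Cd_mul; [apply Cd_const|exact H]. cbv beta; ring. Qed.

Section Inner.
Context {A : Type} (l : list A).
Lemma inner_addl u1 u2 w : inner l (fun k => Cadd (u1 k) (u2 k)) w = Cadd (inner l u1 w) (inner l u2 w).
Proof. unfold inner. rewrite <- sumC_add. apply sumC_ext; intros. apply Cext; simpl; ring. Qed.
Lemma inner_addr u w1 w2 : inner l u (fun k => Cadd (w1 k) (w2 k)) = Cadd (inner l u w1) (inner l u w2).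
Proof. unfold inner. rewrite <- sumC_add. apply sumC_ext; intros. apply Cext; simpl; ring. Qed.
Lemma inner_scall c u w : inner l (fun k => Cmul (RtoC c) (u k)) w = Cmul (RtoC c) (inner l u w).
Proof. unfold inner. rewrite <- sumC_scal. apply sumC_ext; intros. apply Cext; simpl; ring. Qed.
Lemma inner_scalr c u w : inner l u (fun k => Cmul (RtoC c) (w k)) = Cmul (RtoC c) (inner l u w).
Proof. unfold inner. rewrite <- sumC_scal. apply sumC_ext; intros. apply Cext; simpl; ring. Qed.
End Inner.

Section Main.
Context (Sig : Type) (Sig_dec : forall a b : Sig, {a = b} + {a <> b})
  (n m : nat) (X : nat -> nat -> Sig) (r w d : nat) (h : Sig -> nat -> nat -> Cpx)
  (h_herm : forall y, hermitian (seq 0 r) (h y))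
  (h_norm : forall y, opnorm (seq 0 r) (h y) <= 1)
  (HD : R -> Idx -> Idx -> Cpx) (alpha : R -> R) (t : R)
  (HD_herm : hermitian (idx_list n r w d) (HD t))
  (alpha_bd : Rabs (alpha t) <= 1)
  (phi : nat -> R -> Idx -> Cpx)
  (phi_unit : forall p, (p < m)%nat -> vnorm (idx_list n r w d) (phi p t) = 1)
  (phi_schr : forall p k, (p < m)%nat -> In k (idx_list n r w d) ->
                derivable_pt_lim (fun s => re (phi p s k)) t
                  (im (matvec (idx_list n r w d) (Hx HD alpha h (X p) t) (phi p t) k)) /\
                derivable_pt_lim (fun s => im (phi p s k)) t
                  (- re (matvec (idx_list n r w d) (Hx HD alpha h (X p) t) (phi p t) k)))
  (Gamma : nat -> nat -> Cpx) (v : nat -> Cpx) (v_unit : vnorm (seq 0 m) v = 1).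

Let l := idx_list n r w d.
Let c p q := Cmul (Cmul (Cconj (v p)) (v q)) (Gamma p q).
Let Hp p := matvec l (Hx HD alpha h (X p) t) (phi p t).
Let phi' p k := Cmul (mkC 0 (-1)) (Hp p k).
Let u p j b a := phi p t (inl (j,a,b)).
Let g p j b a := matvec (seq 0 r) (h (X p j)) (u p j b) a.
Let G j := hadamard Gamma (DeltaMat Sig_dec X j).
Let U j b a p := Cmul (v p) (u p j b a).
Let Gv j b a p := Cmul (v p) (g p j b a).

Definition dWc := sumC (seq 0 m) (fun p => sumC (seq 0 m) (fun q => Cmul (c p q)
   (sumC l (fun k => Cadd (Cmul (Cconj (phi' p k)) (phi q t k)) (Cmul (Cconj (phi p t k)) (phi' q k)))))).

Lemma W_deriv : Cd (Wfun m l v Gamma phi) t dWc.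
Proof.
  unfold Wfun, dWc. apply Cd_sum; intros p Hp'. apply Cd_sum; intros q Hq.
  apply in_seq in Hp', Hq.
  apply Cd_scal. unfold inner. apply Cd_sum; intros k Hk.
  apply Cd_mul; [apply Cd_conj|]; [destruct (phi_schr p k) as [H1 H2]|destruct (phi_schr q k) as [H1 H2]];
  try lia; auto; split; (eapply dlim_eq; [eassumption|]); unfold phi', Hp, l; simpl; ring.
Qed.

Lemma E1 p q : sumC l (fun k => Cadd (Cmul (Cconj (phi' p k)) (phi q t k)) (Cmul (Cconj (phi p t k)) (phi' q k)))
  = Cmul (mkC 0 1) (Csub (inner l (Hp p) (phi q t)) (inner l (phi p t) (Hp q))).
Proof. unfold inner. rewrite <- sumC_sub, <- sumC_scal. apply sumC_ext; intros. unfold phi'.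
  apply Cext; simpl; ring. Qed.

Lemma E2 p : Hp p = fun k => Cadd (matvec l (HD t) (phi p t) k)
    (Cmul (RtoC (alpha t)) (matvec l (HQ h (X p)) (phi p t) k)).
Proof. extensionality k. unfold Hp, matvec, Hx. rewrite <- sumC_scal, <- sumC_add.
  apply sumC_ext; intros. apply Cext; simpl; ring. Qed.

Lemma E3 p q : Csub (inner l (Hp p) (phi q t)) (inner l (phi p t) (Hp q)) =
  Cmul (RtoC (alpha t)) (Csub (inner l (matvec l (HQ h (X p)) (phi p t)) (phi q t))
                              (inner l (phi p t) (matvec l (HQ h (X q)) (phi q t)))).
Proof. rewrite !E2, inner_addl, inner_scall, inner_addr, inner_scalr.
  rewrite (herm_swap l (HD t)) by exact HD_herm. ring. Qed.

Lemma E4 p q : inner l (matvec l (HQ h (X p)) (phi p t)) (phi q t) =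
  sumC (seq 0 n) (fun j => sumC (seq 0 r) (fun a => sumC (seq 0 w) (fun b =>
    Cmul (Cconj (g p j b a)) (u q j b a)))).
Proof. unfold inner, l. rewrite sumC_idx.
  rewrite (sumC_zero (seq 0 d)). 2:{ intros k _. rewrite matvec_HQ_inr. apply Cext; simpl; ring. }
  match goal with |- Cadd ?X C0 = _ => replace (Cadd X C0) with X by ring end.
  apply sumC_ext; intros j Hj; apply sumC_ext; intros a Ha; apply sumC_ext; intros b Hb.
  apply in_seq in Hj, Hb. rewrite matvec_HQ_inl by lia. reflexivity. Qed.

Lemma E5 p q : inner l (phi p t) (matvec l (HQ h (X q)) (phi q t)) =
  sumC (seq 0 n) (fun j => sumC (seq 0 r) (fun a => sumC (seq 0 w) (fun b =>
    Cmul (Cconj (u p j b a)) (g q j b a)))).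
Proof. unfold inner, l. rewrite sumC_idx.
  rewrite (sumC_zero (seq 0 d)). 2:{ intros k _. rewrite matvec_HQ_inr. apply Cext; simpl; ring. }
  match goal with |- Cadd ?X C0 = _ => replace (Cadd X C0) with X by ring end.
  apply sumC_ext; intros j Hj; apply sumC_ext; intros a Ha; apply sumC_ext; intros b Hb.
  apply in_seq in Hj, Hb. rewrite matvec_HQ_inl by lia. reflexivity. Qed.

Lemma E6 p q j b : sumC (seq 0 r) (fun a => Csub (Cmul (Cconj (g p j b a)) (u q j b a)) (Cmul (Cconj (u p j b a)) (g q j b a)))
  = Cmul (DeltaMat Sig_dec X j p q) (sumC (seq 0 r) (fun a => Csub (Cmul (Cconj (g p j b a)) (u q j b a)) (Cmul (Cconj (u p j b a)) (g q j b a)))).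
Proof. unfold DeltaMat. destruct (Sig_dec (X p j) (X q j)) as [e|e].
  - rewrite sumC_sub. unfold g. rewrite e.
    change (sumC (seq 0 r) (fun a => Cmul (Cconj (matvec (seq 0 r) (h (X q j)) (u p j b) a)) (u q j b a)))
      with (inner (seq 0 r) (matvec (seq 0 r) (h (X q j)) (u p j b)) (u q j b)).
    change (sumC (seq 0 r) (fun a => Cmul (Cconj (u p j b a)) (matvec (seq 0 r) (h (X q j)) (u q j b) a)))
      with (inner (seq 0 r) (u p j b) (matvec (seq 0 r) (h (X q j)) (u q j b))).
    rewrite herm_swap by apply h_herm. ring.
  - ring. Qed.

Lemma E7 j b a : sumC (seq 0 m) (fun p => sumC (seq 0 m) (fun q => Cmul (c p q)
    (Cmul (DeltaMat Sig_dec X j p q) (Csub (Cmul (Cconj (g p j b a)) (u q j b a)) (Cmul (Cconj (u p j b a)) (g q j b a))))))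
  = Csub (inner (seq 0 m) (Gv j b a) (matvec (seq 0 m) (G j) (U j b a)))
         (inner (seq 0 m) (U j b a) (matvec (seq 0 m) (G j) (Gv j b a))).
Proof. unfold inner, matvec. rewrite <- sumC_sub. apply sumC_ext; intros p _.
  rewrite <- !sumC_scal, <- sumC_sub. apply sumC_ext; intros q _.
  unfold c, G, hadamard, Gv, U. apply Cext; simpl; ring. Qed.

Lemma Epq p q : sumC l (fun k => Cadd (Cmul (Cconj (phi' p k)) (phi q t k)) (Cmul (Cconj (phi p t k)) (phi' q k)))
  = Cmul (mkC 0 (alpha t)) (sumC (seq 0 n) (fun j => sumC (seq 0 w) (fun b => sumC (seq 0 r) (fun a =>
      Cmul (DeltaMat Sig_dec X j p q) (Csub (Cmul (Cconj (g p j b a)) (u q j b a)) (Cmul (Cconj (u p j b a)) (g q j b a))))))).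
Proof.
  rewrite E1, E3, E4, E5.
  rewrite (sumC_ext (seq 0 n) (fun j => sumC (seq 0 w) (fun b => sumC (seq 0 r) (fun a =>
      Cmul (DeltaMat Sig_dec X j p q) (Csub (Cmul (Cconj (g p j b a)) (u q j b a)) (Cmul (Cconj (u p j b a)) (g q j b a))))))
      (fun j => sumC (seq 0 w) (fun b => sumC (seq 0 r) (fun a =>
      Csub (Cmul (Cconj (g p j b a)) (u q j b a)) (Cmul (Cconj (u p j b a)) (g q j b a)))))).
  2:{ intros j _. apply sumC_ext; intros b _. rewrite sumC_scal. symmetry. apply E6. }
  rewrite (sumC_ext (seq 0 n) (fun j => sumC (seq 0 w) (fun b => sumC (seq 0 r) (fun a =>
      Csub (Cmul (Cconj (g p j b a)) (u q j b a)) (Cmul (Cconj (u p j b a)) (g q j b a))))) (fun j => Csub (sumC (seq 0 r) (fun a => sumC (seq 0 w) (fun b =>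
      Cmul (Cconj (g p j b a)) (u q j b a)))) (sumC (seq 0 r) (fun a => sumC (seq 0 w) (fun b =>
      Cmul (Cconj (u p j b a)) (g q j b a)))))).
  2:{ intros j _. rewrite (sumC_swap (seq 0 r) (seq 0 w)), (sumC_swap (seq 0 r) (seq 0 w)).
      rewrite <- sumC_sub. apply sumC_ext; intros b _. apply sumC_sub. }
  rewrite sumC_sub.
  generalize (sumC (seq 0 n) (fun j => sumC (seq 0 r) (fun a => sumC (seq 0 w) (fun b => Cmul (Cconj (g p j b a)) (u q j b a))))).
  generalize (sumC (seq 0 n) (fun j => sumC (seq 0 r) (fun a => sumC (seq 0 w) (fun b => Cmul (Cconj (u p j b a)) (g q j b a))))).
  intros; apply Cext; simpl; ring.
Qed.

Definition Dsum := sumC (seq 0 n) (fun j => sumC (seq 0 w) (fun b => sumC (seq 0 r) (fun a =>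
  Csub (inner (seq 0 m) (Gv j b a) (matvec (seq 0 m) (G j) (U j b a)))
       (inner (seq 0 m) (U j b a) (matvec (seq 0 m) (G j) (Gv j b a)))))).

Lemma dWc_eq : dWc = Cmul (mkC 0 (alpha t)) Dsum.
Proof.
  unfold dWc. rewrite (sumC_ext (seq 0 m) _ (fun p => sumC (seq 0 m) (fun q => Cmul (mkC 0 (alpha t))
    (sumC (seq 0 n) (fun j => sumC (seq 0 w) (fun b => sumC (seq 0 r) (fun a => Cmul (c p q)
      (Cmul (DeltaMat Sig_dec X j p q) (Csub (Cmul (Cconj (g p j b a)) (u q j b a)) (Cmul (Cconj (u p j b a)) (g q j b a))))))))))).
  2:{ intros p _. apply sumC_ext; intros q _. rewrite Epq.
      match goal with |- Cmul ?C (Cmul ?I ?S) = _ => replace (Cmul C (Cmul I S)) with (Cmul I (Cmul C S)) by ring end.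
      f_equal. rewrite <- sumC_scal. apply sumC_ext; intros j _. rewrite <- sumC_scal.
      apply sumC_ext; intros b _. rewrite <- sumC_scal. reflexivity. }
  rewrite (sumC_ext (seq 0 m) _ (fun p => Cmul (mkC 0 (alpha t)) (sumC (seq 0 m) (fun q =>
    (sumC (seq 0 n) (fun j => sumC (seq 0 w) (fun b => sumC (seq 0 r) (fun a => Cmul (c p q)
      (Cmul (DeltaMat Sig_dec X j p q) (Csub (Cmul (Cconj (g p j b a)) (u q j b a)) (Cmul (Cconj (u p j b a)) (g q j b a))))))))))))
    by (intros; apply sumC_scal).
  rewrite sumC_scal. f_equal. unfold Dsum.
  rewrite (sumC_ext (seq 0 m) _ (fun p => sumC (seq 0 n) (fun j => sumC (seq 0 w) (fun b => sumC (seq 0 r) (fun a =>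
     sumC (seq 0 m) (fun q => Cmul (c p q)
      (Cmul (DeltaMat Sig_dec X j p q) (Csub (Cmul (Cconj (g p j b a)) (u q j b a)) (Cmul (Cconj (u p j b a)) (g q j b a)))))))))).
  2:{ intros p _. rewrite sumC_swap. apply sumC_ext; intros j _. rewrite sumC_swap.
      apply sumC_ext; intros b _. rewrite sumC_swap. reflexivity. }
  rewrite sumC_swap. apply sumC_ext; intros j _. rewrite sumC_swap. apply sumC_ext; intros b _.
  rewrite sumC_swap. apply sumC_ext; intros a _. apply E7.
Qed.

Lemma nsq_one p : (p < m)%nat -> nsq l (phi p t) = 1.
Proof. intros Hp0. assert (H := phi_unit p Hp0). rewrite vnorm_nsq in H. fold l in H.
  rewrite <- (sqrt_sqrt (nsq l (phi p t))) by apply nsq_ge0. rewrite H; ring. Qed.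
Lemma nsq_v : nsq (seq 0 m) v = 1.
Proof. assert (H := v_unit). rewrite vnorm_nsq in H.
  rewrite <- (sqrt_sqrt (nsq (seq 0 m) v)) by apply nsq_ge0. rewrite H; ring. Qed.

Let sq z := re z ^ 2 + im z ^ 2.
Lemma sq_ge0 z : 0 <= sq z.
Proof. unfold sq; nra. Qed.

Lemma u_bound p : (p < m)%nat ->
  sumR (seq 0 n) (fun j => sumR (seq 0 w) (fun b => sumR (seq 0 r) (fun a => sq (u p j b a)))) <= 1.
Proof. intros Hp0. rewrite <- (nsq_one p Hp0). unfold nsq, l. rewrite sumR_idx.
  assert (0 <= sumR (seq 0 d) (fun k => re (phi p t (inr k)) ^ 2 + im (phi p t (inr k)) ^ 2))
    by (apply sumR_ge0; intros; nra).
  rewrite (sumR_ext (seq 0 n) (fun j => sumR (seq 0 r) _) (fun j => sumR (seq 0 w) (fun b => sumR (seq 0 r) (fun a => sq (u p j b a))))).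
  lra. intros j _. apply sumR_swap. Qed.

Lemma g_bound p j b : sumR (seq 0 r) (fun a => sq (g p j b a)) <= sumR (seq 0 r) (fun a => sq (u p j b a)).
Proof. assert (H := opnorm_bound_sq (seq 0 r) (h (X p j)) (u p j b)).
  assert (H1 := opnorm_ge0 (seq 0 r) (h (X p j))). assert (H2 := h_norm (X p j)).
  assert (H3 := nsq_ge0 (seq 0 r) (u p j b)).
  change (nsq (seq 0 r) (matvec (seq 0 r) (h (X p j)) (u p j b)) <= nsq (seq 0 r) (u p j b)).
  assert (opnorm (seq 0 r) (h (X p j)) ^ 2 <= 1) by nra. nra. Qed.

Lemma S_bound : sumR (seq 0 n) (fun j => sumR (seq 0 w) (fun b => sumR (seq 0 r) (fun a =>
   nsq (seq 0 m) (Gv j b a) + nsq (seq 0 m) (U j b a)))) <= 2.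
Proof.
  rewrite (sumR_ext (seq 0 n) _ (fun j => sumR (seq 0 w) (fun b => sumR (seq 0 r) (fun a =>
     sumR (seq 0 m) (fun p => sq (v p) * (sq (g p j b a) + sq (u p j b a))))))).
  2:{ intros j _; apply sumR_ext; intros b _; apply sumR_ext; intros a _.
      unfold nsq. rewrite <- sumR_add. apply sumR_ext; intros. unfold Gv, U, sq; simpl; ring. }
  rewrite (sumR_ext (seq 0 n) _ (fun j => sumR (seq 0 m) (fun p => sumR (seq 0 w) (fun b => sumR (seq 0 r) (fun a =>
     sq (v p) * (sq (g p j b a) + sq (u p j b a))))))).
  2:{ intros j _. rewrite (sumR_ext (seq 0 w) _ (fun b => sumR (seq 0 m) (fun p => sumR (seq 0 r) (fun a =>
     sq (v p) * (sq (g p j b a) + sq (u p j b a)))))) by (intros; apply sumR_swap).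
      apply sumR_swap. }
  rewrite sumR_swap.
  apply Rle_trans with (sumR (seq 0 m) (fun p => sq (v p) * 2)).
  2:{ rewrite (sumR_ext _ _ (fun p => 2 * sq (v p))) by (intros; ring). rewrite sumR_scal.
      fold sq. change (sumR (seq 0 m) (fun a => sq (v a))) with (nsq (seq 0 m) v). rewrite nsq_v. lra. }
  apply sumR_le; intros p Hp0. apply in_seq in Hp0.
  rewrite (sumR_ext _ _ (fun j => sq (v p) * sumR (seq 0 w) (fun b => sumR (seq 0 r) (fun a => sq (g p j b a)) + sumR (seq 0 r) (fun a => sq (u p j b a))))).
  2:{ intros j _. rewrite <- sumR_scal. apply sumR_ext; intros b _. rewrite <- sumR_add, <- sumR_scal. reflexivity. }
  rewrite sumR_scal. assert (Hv := sq_ge0 (v p)). apply Rmult_le_compat_l; auto.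
  apply Rle_trans with (sumR (seq 0 n) (fun j => sumR (seq 0 w) (fun b => 2 * sumR (seq 0 r) (fun a => sq (u p j b a))))).
  - apply sumR_le; intros j _; apply sumR_le; intros b _. assert (H := g_bound p j b). lra.
  - rewrite (sumR_ext (seq 0 n) _ (fun j => 2 * sumR (seq 0 w) (fun b => sumR (seq 0 r) (fun a => sq (u p j b a)))))
      by (intros; apply sumR_scal).
    rewrite sumR_scal. assert (H := u_bound p ltac:(lia)). lra.
Qed.

Lemma Cmod_sum_le {A} (L : list A) f F : (forall a, In a L -> Cmod (f a) <= F a) -> Cmod (sumC L f) <= sumR L F.
Proof. intros H. eapply Rle_trans; [apply Cmod_sum| apply sumR_le; auto]. Qed.
Lemma Cmod_sub x y : Cmod (Csub x y) <= Cmod x + Cmod y.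
Proof. unfold Csub. eapply Rle_trans; [apply Cmod_tri|].
  assert (E : Cmod (Copp y) = Cmod y) by (unfold Cmod, Copp; simpl; f_equal; ring). lra. Qed.

Lemma Dsum_bound Mx : (forall j, (j < n)%nat -> opnorm (seq 0 m) (G j) <= Mx) -> 0 <= Mx ->
  Cmod Dsum <= 2 * Mx.
Proof. intros HM HM0. unfold Dsum.
  eapply Rle_trans. apply Cmod_sum_le with (F := fun j => sumR (seq 0 w) (fun b => sumR (seq 0 r) (fun a =>
    Mx * (nsq (seq 0 m) (Gv j b a) + nsq (seq 0 m) (U j b a))))).
  - intros j Hj. apply in_seq in Hj. apply Cmod_sum_le; intros b _. apply Cmod_sum_le; intros a _.
    eapply Rle_trans; [apply Cmod_sub|].
    assert (H1 := key_bound (seq 0 m) (G j) (Gv j b a) (U j b a)).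
    assert (H2 := key_bound (seq 0 m) (G j) (U j b a) (Gv j b a)).
    assert (H3 := HM j ltac:(lia)). assert (H4 := nsq_ge0 (seq 0 m) (Gv j b a)).
    assert (H5 := nsq_ge0 (seq 0 m) (U j b a)). assert (H6 := opnorm_ge0 (seq 0 m) (G j)). nra.
  - rewrite (sumR_ext (seq 0 n) _ (fun j => Mx * sumR (seq 0 w) (fun b => sumR (seq 0 r) (fun a =>
      (nsq (seq 0 m) (Gv j b a) + nsq (seq 0 m) (U j b a)))))).
    2:{ intros j _. rewrite <- sumR_scal. apply sumR_ext; intros b _. rewrite <- sumR_scal. reflexivity. }
    rewrite sumR_scal. assert (H := S_bound). nra.
Qed.
End Main.


Lemma cs2 a b x y : a * x + b * y <= sqrt (a^2 + b^2) * sqrt (x^2 + y^2).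
Proof. assert (0 <= a^2) by apply pow2_ge_0. assert (0 <= b^2) by apply pow2_ge_0.
  assert (0 <= x^2) by apply pow2_ge_0. assert (0 <= y^2) by apply pow2_ge_0.
  assert (0 <= (a*y-b*x)^2) by apply pow2_ge_0.
  rewrite <- sqrt_mult by lra.
  apply Rle_trans with (Rabs (a*x+b*y)); [apply Rle_abs|].
  rewrite <- sqrt_Rsqr_abs. apply sqrt_le_1_alt. unfold Rsqr. nra. Qed.

Theorem mainTheorem6
  (Sig : Type) (Sig_dec : forall a b : Sig, {a = b} + {a <> b})
  (Sig_fin : exists e : list Sig, forall a, In a e)
  (n m : nat) (X : nat -> nat -> Sig)
  (X_distinct : forall p q, (p < m)%nat -> (q < m)%nat -> p <> q ->
                  exists j, (j < n)%nat /\ X p j <> X q j)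
  (r w d : nat) (h : Sig -> nat -> nat -> Cpx)
  (h_herm : forall y, hermitian (seq 0 r) (h y))
  (h_norm : forall y, opnorm (seq 0 r) (h y) <= 1)
  (T : R) (HT : 0 <= T)
  (HD : R -> Idx -> Idx -> Cpx) (alpha : R -> R)
  (HD_herm : forall t, 0 <= t <= T -> hermitian (idx_list n r w d) (HD t))
  (alpha_bd : forall t, 0 <= t <= T -> Rabs (alpha t) <= 1)
  (pw_cont : exists bs : list R, forall t, 0 < t < T -> ~ In t bs ->
               ham_continuous_at (idx_list n r w d) HD alpha t)
  (phi : nat -> R -> Idx -> Cpx)
  (phi_unit : forall p t, (p < m)%nat -> 0 <= t <= T ->
                vnorm (idx_list n r w d) (phi p t) = 1)
  (phi_cont : forall p k t, (p < m)%nat -> In k (idx_list n r w d) -> 0 <= t <= T ->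
                continuity_pt (fun s => re (phi p s k)) t /\
                continuity_pt (fun s => im (phi p s k)) t)
  (phi_schr : forall p k t, (p < m)%nat -> In k (idx_list n r w d) -> 0 < t < T ->
                ham_continuous_at (idx_list n r w d) HD alpha t ->
                derivable_pt_lim (fun s => re (phi p s k)) t
                  (im (matvec (idx_list n r w d) (Hx HD alpha h (X p) t) (phi p t) k)) /\
                derivable_pt_lim (fun s => im (phi p s k)) t
                  (- re (matvec (idx_list n r w d) (Hx HD alpha h (X p) t) (phi p t) k)))
  (Gamma : nat -> nat -> Cpx) (Gamma_herm : hermitian (seq 0 m) Gamma)
  (v : nat -> Cpx) (v_unit : vnorm (seq 0 m) v = 1) :
  let M := maxR (map (fun j => opnorm (seq 0 m) (hadamard Gamma (DeltaMat Sig_dec X j)))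
                     (seq 0 n)) in
  let W := Wfun m (idx_list n r w d) v Gamma phi in
  (forall t, 0 < t < T -> ham_continuous_at (idx_list n r w d) HD alpha t ->
     exists dre dim,
       derivable_pt_lim (fun s => re (W s)) t dre /\
       derivable_pt_lim (fun s => im (W s)) t dim /\
       sqrt (dre ^ 2 + dim ^ 2) <= 2 * M) /\
  Cmod (Csub (W T) (W 0)) <= 2 * T * M.
Proof.
  intros M W.
  assert (HM0 : 0 <= M) by apply maxR_ge0.
  assert (HMj : forall j, (j < n)%nat -> opnorm (seq 0 m) ((fun j => hadamard Gamma (DeltaMat Sig_dec X j)) j) <= M).
  { intros j Hj. apply maxR_in. apply in_map_iff. exists j; split; auto. apply in_seq; lia. }
  assert (Part1 : forall t, 0 < t < T -> ham_continuous_at (idx_list n r w d) HD alpha t ->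
     exists dre dim,
       derivable_pt_lim (fun s => re (W s)) t dre /\
       derivable_pt_lim (fun s => im (W s)) t dim /\
       sqrt (dre ^ 2 + dim ^ 2) <= 2 * M).
  { intros t Ht Hc.
    destruct (W_deriv Sig n m X r w d h HD alpha t phi
               (fun p k Hp Hk => phi_schr p k t Hp Hk Ht Hc) Gamma v) as [H1 H2].
    eexists; eexists; split; [exact H1|]; split; [exact H2|].
    change (Cmod (dWc Sig n m X r w d h HD alpha t phi Gamma v) <= 2 * M).
    rewrite (dWc_eq Sig Sig_dec n m X r w d h h_herm HD alpha t (HD_herm t ltac:(lra)) phi Gamma v).
    rewrite Cmod_mul.
    assert (Ha : Cmod (mkC 0 (alpha t)) <= 1).
    { unfold Cmod; simpl. replace (0 * (0 * 1) + alpha t * (alpha t * 1)) with (Rsqr (alpha t)) by (unfold Rsqr; ring).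
      rewrite sqrt_Rsqr_abs. apply alpha_bd; lra. }
    assert (HD' := Dsum_bound Sig Sig_dec n m X r w d h h_norm t phi (fun p Hp => phi_unit p t Hp ltac:(lra))
                   Gamma v v_unit M HMj HM0).
    assert (H0a := Cmod_ge0 (mkC 0 (alpha t))).
    assert (H0b := Cmod_ge0 (Dsum Sig Sig_dec n m X r w h t phi Gamma v)). nra. }
  split; [exact Part1|].
  set (c := Csub (W T) (W 0)).
  set (gf := fun s => re c * re (W s) + im c * im (W s)).
  destruct pw_cont as [bs Hbs].
  assert (Hcont : forall t, 0 <= t <= T -> Cc W t).
  { intros t Ht. unfold W, Wfun. apply Cc_sum; intros p Hp. apply Cc_sum; intros q Hq.
    apply in_seq in Hp, Hq.
    apply Cc_mul; [apply Cc_const|]. unfold inner. apply Cc_sum; intros k Hk.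
    apply Cc_mul; [apply Cc_conj|]; apply phi_cont; auto; lia. }
  assert (Hmvt := mvt_exc gf (Cmod c * (2 * M)) bs 0 T HT).
  assert (Hg : gf T - gf 0 <= Cmod c * (2 * M) * (T - 0)).
  { apply Hmvt.
    - intros t Ht. destruct (Hcont t Ht) as [C1' C2']. unfold gf.
      apply continuity_pt_plus; apply continuity_pt_mult; auto; apply continuity_pt_const; intros ? ?; auto.
    - intros t Ht Hn. destruct (Part1 t Ht (Hbs t Ht Hn)) as [dre [dim [D1 [D2 D3]]]].
      exists (re c * dre + im c * dim). split.
      + unfold gf. eapply dlim_eq. apply derivable_pt_lim_plus; apply derivable_pt_lim_mult;
          try apply derivable_pt_lim_const; eauto. cbv beta; ring.
      + eapply Rle_trans; [apply cs2|]. fold (Cmod c).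
        assert (Hc0 := Cmod_ge0 c). assert (0 <= sqrt (dre^2 + dim^2)) by apply sqrt_pos.
        apply Rmult_le_compat_l; auto. }
  assert (E : gf T - gf 0 = Cmod c * Cmod c).
  { rewrite Cmod_sq. unfold gf, c, Csub, Cadd, Copp; simpl. ring. }
  rewrite E in Hg. assert (Hc0 := Cmod_ge0 c). fold c.
  assert (0 <= 2 * T * M) by nra. nra.
Qed.
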